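(* Let $\tau(t)$ be a tau function of the KP hierarchy, $n\ge1$, and $\alpha_1,\dots,\alpha_n$ nonzero distinct complex numbers. Put $f(t,\alpha,\beta)=\frac{\tau(t+[\beta]-[\alpha])}{\beta-\alpha}$ and, for $|\beta|<|\alpha|$, expand $f(t,\alpha,\beta)=\sum_{j\ge0}f_j(t,\alpha)\beta^j$. Let $D=\det\big(f(t,\alpha_j,\beta_i)\big)_{1\le i,j\le n}$ and $F=D/\prod_{1\le i<j\le n}(\beta_j-\beta_i)$, which extends holomorphically to $\beta_i=0$. Define $F_0=F$ and $F_k=F_{k-1}|_{\beta_k=0}$ for $1\le k\le n$. Let $\mathcal B_k=\prod_{k\le i<j\le n}(\beta_j-\beta_i)$ for $1\le k\le n-1$ and $\mathcal B_n=\mathcal B_{n+1}=1$. Then for $1\le k\le n$, $$F_k=\frac{D_k}{\mathcal B_{k+1}\prod_{j=k+1}^n\beta_j^k},$$ where $D_k$ is the $n\times n$ determinant whose $(i,j)$ entry is $f_{i-1}(t,\alpha_j)$ for $1\le i\le k$ and $f(t,\alpha_j,\beta_i)$ for $k+1\le i\le n$ (the empty product for $k=n$ being $1$). In particular $F_n=\det\big(f_{i-1}(t,\alpha_j)\big)_{1\le i,j\le n}$.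
   Context: Let $t=(t_1,t_2,t_3,\dots)$ be infinitely many variables. For a complex number $z$ put $[z]=(z,z^2/2,z^3/3,\dots)$ and $\eta(t,z)=\sum_{j\ge1}t_jz^j$. A tau function of the KP hierarchy is a nonzero function $\tau(t)$ satisfying the bilinear identity $\mathrm{res}_{z=0}\,\tau(t-s-[z])\tau(t+s+[z])e^{-2\eta(s,z^{-1})}\frac{dz}{z^2}=0$ for all $s=(s_1,s_2,\dots)$. *)

(* Defs.v *)
From HB Require Import structures.
From mathcomp Require Import all_boot all_order all_algebra.
From mathcomp Require Import all_classical all_reals all_analysis.
From mathcomp Require Import complex.
Set Implicit Arguments. Unset Strict Implicit. Unset Printing Implicit Defensive.
Import Order.TTheory GRing.Theory Num.Theory.
Import numFieldTopology.Exports numFieldNormedType.Exports.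
Local Open Scope ring_scope.
Local Open Scope classical_set_scope.

Section KPDefs.
Variable R : realType.
Local Notation C := (complex R).

HB.instance Definition _ := NormedModule.copy C C^o.

(* Times t = (t_1, t_2, ...) are encoded as [t : nat -> C] with t_{j+1} = t j. *)

Definition bracket (z : C) : nat -> C := fun j => z ^+ j.+1 / j.+1%:R.

(* eta(s, w) = sum_{j>=1} s_j w^j, for s supported on the first N times *)
Definition eta (N : nat) (s : nat -> C) (w : C) : C :=
  \sum_(i < N) s i * w ^+ i.+1.

Definition expC (z : C) : C := limn (series (fun n => z ^+ n / n`!%:R)).

(* [has_residue0 g c]: g has a Laurent expansion
   g z = sum_{m>=0} a_m z^m + sum_{m>=0} b_m z^{-(m+1)} on a punctured disk
   0 < |z| < r, and its residue at 0 (the coefficient b_0 of z^{-1}) is c. *)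
Definition has_residue0 (g : C -> C) (c : C) : Prop :=
  exists r : C, 0 < r /\
  exists a b : nat -> C,
    (forall z : C, 0 < `|z| < r ->
       exists A B : C,
         series (fun m => a m * z ^+ m) @ \oo --> A /\
         series (fun m => b m * z ^- m.+1) @ \oo --> B /\
         g z = A + B)
    /\ b 0%N = c.

(* tau is a (nonzero) tau function of the KP hierarchy: the bilinear identity
   res_{z=0} tau(t-s-[z]) tau(t+s+[z]) e^{-2 eta(s,1/z)} dz/z^2 = 0
   holds for all t and all s (s with finitely many nonzero times, so that
   eta(s, 1/z) is meaningful). *)
Definition KP_tau (tau : (nat -> C) -> C) : Prop :=
  (exists t, tau t != 0) /\
  forall (t s : nat -> C) (N : nat), (forall i, (N <= i)%N -> s i = 0) ->
    has_residue0
      (fun z => tau (fun j => t j - s j - bracket z j)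
              * tau (fun j => t j + s j + bracket z j)
              * expC (- 2 * eta N s z^-1) / z ^+ 2) 0.

Definition fKP (tau : (nat -> C) -> C) (t : nat -> C) (a b : C) : C :=
  tau (fun j => t j + bracket b j - bracket a j) / (b - a).

Variables (n : nat) (tau : (nat -> C) -> C) (t : nat -> C) (alpha : 'I_n -> C).

Definition Ddet (beta : 'I_n -> C) : C :=
  \det (\matrix_(i < n, j < n) fKP tau t (alpha j) (beta i)).

Definition Ffun (beta : 'I_n -> C) : C :=
  Ddet beta / \prod_(i < n) \prod_(j < n | (i < j)%N) (beta j - beta i).

Definition upd (beta : 'I_n -> C) (k : nat) (z : C) : 'I_n -> C :=
  fun i => if val i == k then z else beta i.

(* F_0 = F, F_k = F_{k-1}|_{beta_k = 0} (value at 0 of the extension,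
   i.e. the limit beta_k -> 0); in 0-based indexing beta_k is [beta (k-1)]. *)
Fixpoint Fk (k : nat) (beta : 'I_n -> C) : C :=
  match k with
  | 0 => Ffun beta
  | k'.+1 => lim (Fk k' (upd beta k' z) @[z --> 0^'])
  end.

Definition Dk (fj : C -> nat -> C) (k : nat) (beta : 'I_n -> C) : C :=
  \det (\matrix_(i < n, j < n)
          if (i < k)%N then fj (alpha j) i else fKP tau t (alpha j) (beta i)).

(* B_{k+1} = prod_{k+1 <= i < j <= n} (beta_j - beta_i)  (1-based) *)
Definition Bk1 (k : nat) (beta : 'I_n -> C) : C :=
  \prod_(i < n | (k <= i)%N) \prod_(j < n | (i < j)%N) (beta j - beta i).

End KPDefs.

(* Main.v *)
Require Import Defs.
From HB Require Import structures.
From mathcomp Require Import all_boot all_order all_algebra.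
From mathcomp Require Import all_classical all_reals all_analysis.
From mathcomp Require Import complex.
From mathcomp Require Import ring.
Import Order.TTheory GRing.Theory Num.Theory.
Import numFieldTopology.Exports numFieldNormedType.Exports.
Local Open Scope ring_scope.
Local Open Scope classical_set_scope.
Lemma geo_bound (K : numFieldType) (q : K) : 0 <= q -> q * 2 <= 1 ->
  forall L N, \sum_(L <= m < L + N) q ^+ m + 2 * q ^+ (L + N) <= 2 * q ^+ L.
Proof.
move=> q0 q2 L; elim=> [|N IH]; first by rewrite addn0 big_geq // add0r.
rewrite addnS big_nat_recr ?leq_addr //= (le_trans _ IH) // -addrA lerD2l.
rewrite exprS; set x := q ^+ (L + N).
have -> : x + 2 * (q * x) = x + x * (q * 2) by ring.
have -> : 2 * x = x + x by ring.
rewrite lerD2l; have := ler_wpM2l (exprn_ge0 (L + N) q0) q2; by rewrite mulr1.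
Qed.
Section Pow.
Variable R : realType.
Local Notation C := (complex R).

Lemma powser_rem (a : nat -> C) (S : C -> C) (r : C) :
  0 < r -> (forall b : C, `|b| < r -> series (fun m => a m * b ^+ m) @ \oo --> S b) ->
  forall k, (S z - \sum_(m < k) a m * z ^+ m) / z ^+ k @[z --> (0:C)^'] --> a k.
Proof.
move=> r0 Hs k.
pose rho := r / 2.
have rho0 : 0 < rho by rewrite divr_gt0.
have rhor : rho < r by rewrite /rho ltr_pdivrMr // ltr_pMr // ltr1n.
have nrho : `|rho| = rho by rewrite gtr0_norm.
clearbody rho.
have Hrho := Hs rho ltac:(by rewrite nrho).
pose u := fun m => a m * rho ^+ m.
have u0 : u @ \oo --> 0 by apply: cvg_series_cvg_0; apply: cvgP Hrho.
have [M [M0 HM]] : exists M, 0 < M /\ forall m, `|u m| <= M.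
  have := cvg_seq_bounded (cvgP _ u0).
  case=> M0 [M0r HM0].
  exists (`|M0| + 1); split; first by rewrite ltr_pwDr ?normr_ge0 // ltr01.
  move=> m; apply: (HM0 (`|M0| + 1)) => //.
  by rewrite ltr_pwDr ?real_ler_norm // ltr01.
apply/cvgrPdist_le => e e0.
pose C0 := 2 * M / rho ^+ k.+1.
have C00 : 0 < C0 by rewrite divr_gt0 ?mulr_gt0 ?exprn_gt0.
have e2 : 0 < e / 2 / C0 by apply: divr_gt0 => //; apply: divr_gt0.
near=> z.
have z0 : z != 0 by near: z; exact: nbhs_dnbhs_neq.
have zr : `|z| <= rho / 2 by near: z; apply: nbhs_dnbhs; apply: nbhs0_le; rewrite divr_gt0.
have ze : `|z| <= e / 2 / C0 by near: z; apply: nbhs_dnbhs; apply: nbhs0_le.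
have zpos : 0 < `|z| by rewrite normr_gt0.
have zk : 0 < `|z| ^+ k by rewrite exprn_gt0.
have zrr : `|z| < r.
  apply: (le_lt_trans zr); apply: lt_trans rhor.
  by rewrite ltr_pdivrMr // ltr_pMr // ltr1n.
have := Hs z zrr => /cvgrPdist_le /(_ (`|z| ^+ k * (e / 2))).
move=> /(_ (mulr_gt0 zk (divr_gt0 e0 (ltr0Sn _ 1)))) HN.
have [N [HN1 HN2]] := filter_ex (filterI HN (nbhs_infty_ge k.+1)).
set sN := series _ N in HN1.
pose q := `|z| / rho.
have q0 : 0 <= q by rewrite divr_ge0 // ltW.
have q2 : q * 2 <= 1.
  rewrite /q mulrAC ler_pdivrMr // mul1r -ler_pdivlMr //; done.
have hP : `|sN - \sum_(m < k.+1) a m * z ^+ m| <= C0 * `|z| ^+ k.+1.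
  rewrite /sN /series /= (big_cat_nat (leq0n k.+1) HN2) /= big_mkord addrC addrK.
  apply: (le_trans (ler_norm_sum _ _ _)).
  apply: (@le_trans _ _ (\sum_(k.+1 <= m < N) M * q ^+ m)).
    apply: ler_sum => m _.
    have -> : `|a m * z ^+ m| = `|u m| * q ^+ m.
      rewrite /u /q !normrM !normrX nrho -mulrA expr_div_n; congr (_ * _).
      rewrite mulrCA divff ?mulr1 //.
      by rewrite expf_neq0 // gt_eqF.
    by apply: ler_wpM2r => //; rewrite exprn_ge0.
  rewrite -mulr_sumr.
  have := geo_bound _ _ q0 q2 k.+1 (N - k.+1); rewrite subnKC // => hg.
  apply: (@le_trans _ _ (M * (2 * q ^+ k.+1))).
    apply: ler_wpM2l; first exact: ltW.
    apply: le_trans hg; rewrite lerDl; by rewrite mulr_ge0 ?exprn_ge0.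
  rewrite /C0 /q expr_div_n; set X := `|z| ^+ k.+1; set Y := rho ^+ k.+1.
  by have -> : M * (2 * (X / Y)) = 2 * M / Y * X by ring.
have ek : a k - (S z - \sum_(m < k) a m * z ^+ m) / z ^+ k
    = - ((S z - \sum_(m < k.+1) a m * z ^+ m) / z ^+ k).
  rewrite big_ord_recr /=; field; by rewrite expf_neq0.
rewrite ek normrN normrM normfV normrX ler_pdivrMr //.
apply: (le_trans (ler_distD sN _ _)).
apply: (@le_trans _ _ (`|z| ^+ k * (e / 2) + `|z| ^+ k * (e / 2))).
  apply: lerD => //.
  apply: (le_trans hP); rewrite exprSr mulrCA; apply: ler_wpM2l; first exact: ltW.
  by rewrite mulrC -ler_pdivlMr.
by rewrite -mulrDr -splitr mulrC.
Unshelve. all: by end_near. Qed.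
End Pow.
Section Alg.
Variable R : realType.
Local Notation C := (complex R).
Variables (n : nat) (tau : (nat -> C) -> C) (t : nat -> C) (alpha : 'I_n -> C)
  (fj : C -> nat -> C) (beta : 'I_n -> C) (k : nat) (hk : (k < n)%N).

Let k0 : 'I_n := Ordinal hk.

Definition Mv (v : 'I_n -> C) : 'M[C]_n := \matrix_(i < n, j < n)
  if i == k0 then v j else
  if (i < k)%N then fj (alpha j) i else fKP tau t (alpha j) (beta i).

Definition cof (j : 'I_n) := cofactor (Mv (fun _ => 0)) k0 j.

Lemma detMv v : \det (Mv v) = \sum_j v j * cof j.
Proof.
rewrite (expand_det_row _ k0); apply: eq_bigr => j _.
rewrite /cof /Mv mxE eqxx; congr (_ * _).
rewrite /cofactor; congr (_ * \det _).
apply/matrixP => a b; rewrite !mxE.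
by rewrite eq_sym (negbTE (neq_lift k0 a)).
Qed.

Lemma Dk_upd z : Dk tau t alpha fj k (upd beta k z) = \det (Mv (fun j => fKP tau t (alpha j) z)).
Proof.
congr (\det _); apply/matrixP => i j; rewrite !mxE /upd.
have -> : (i == k0) = (val i == k) by [].
case: eqP => [->|_] //; by rewrite ltnn.
Qed.

Lemma Dk_S : Dk tau t alpha fj k.+1 beta = \det (Mv (fun j => fj (alpha j) k)).
Proof.
congr (\det _); apply/matrixP => i j; rewrite !mxE.
have -> : (i == k0) = (val i == k) by [].
case: eqP => [->|/eqP ik]; first by rewrite ltnSn.
by rewrite ltnS leq_eqVlt (negbTE ik).
Qed.

Lemma cof_zero m : (m < k)%N -> \sum_j fj (alpha j) m * cof j = 0.
Proof.
move=> mk; rewrite -detMv.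
have mn : (m < n)%N by apply: ltn_trans hk.
apply: (@determinant_alternate _ _ _ k0 (Ordinal mn)).
  by apply/eqP => /(congr1 val) /= km; move: mk; rewrite km ltnn.
move=> j; rewrite !mxE /=.
have -> : (Ordinal mn == k0) = (m == k) by [].
by rewrite eqxx mk (ltn_eqF mk).
Qed.

Lemma pred_split (i : 'I_n) : ((k <= i)%N && (i != k0)) = (k.+1 <= i)%N.
Proof.
have -> : (i != k0) = (val i != k) by [].
by rewrite ltn_neqAle eq_sym andbC.
Qed.

Lemma Bk1_upd z : Bk1 k (upd beta k z) =
  \prod_(j < n | (k < j)%N) (beta j - z) * Bk1 k.+1 beta.
Proof.
rewrite /Bk1 (bigD1 k0) //=; congr (_ * _).
  by apply: eq_bigr => j kj; rewrite /upd eqxx (gtn_eqF kj).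
apply: eq_big => i; first exact: pred_split.
rewrite pred_split => ki; apply: eq_bigr => j ij.
by rewrite /upd (gtn_eqF ki) (gtn_eqF (ltn_trans ki ij)).
Qed.

Lemma prod_upd z : \prod_(j < n | (k <= j)%N) upd beta k z j ^+ k =
  z ^+ k * \prod_(j < n | (k.+1 <= j)%N) beta j ^+ k.
Proof.
rewrite (bigD1 k0) //=; congr (_ * _); first by rewrite /upd eqxx.
apply: eq_big => i; first exact: pred_split.
by rewrite pred_split => ki; rewrite /upd (gtn_eqF ki).
Qed.

Definition gfun (j : 'I_n) (z : C) :=
  (fKP tau t (alpha j) z - \sum_(m < k) fj (alpha j) m * z ^+ m) / z ^+ k.

Lemma Dk_upd_g z : z != 0 ->
  Dk tau t alpha fj k (upd beta k z) = z ^+ k * \sum_j gfun j z * cof j.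
Proof.
move=> z0; rewrite Dk_upd detMv.
have e j : fKP tau t (alpha j) z = z ^+ k * gfun j z + \sum_(m < k) fj (alpha j) m * z ^+ m.
  by rewrite /gfun mulrC divfK ?expf_neq0 // subrK.
rewrite (eq_bigr (fun j => z ^+ k * (gfun j z * cof j) +
   \sum_(m < k) z ^+ m * (fj (alpha j) m * cof j))); last first.
  move=> j _; rewrite e mulrDl mulr_suml mulrA; congr (_ + _).
  by apply: eq_bigr => m _; rewrite mulrA [z ^+ m * _]mulrC.
rewrite big_split /= -mulr_sumr exchange_big /= [X in _ + X]big1 ?addr0 // => m _.
by rewrite -mulr_sumr cof_zero ?mulr0.
Qed.

End Alg.

Section Big.
Variable R : realType.
Local Notation C := (complex R).

Lemma cvg_sumC (T : Type) (F : set_system T) (FF : Filter F) (I : Type) (r : seq I)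
  (P : pred I) (f : I -> T -> C) (a : I -> C) :
  (forall i, P i -> f i x @[x --> F] --> a i) ->
  \sum_(i <- r | P i) f i x @[x --> F] --> \sum_(i <- r | P i) a i.
Proof.
move=> H; elim: r => [|i r IH].
  rewrite big_nil; under eq_cvg do rewrite big_nil; exact: cvg_cst.
rewrite big_cons; under eq_cvg do rewrite big_cons.
case: ifP => Pi; last exact: IH.
apply: cvgD; [exact: H | exact: IH].
Qed.

Lemma cvg_prodC (T : Type) (F : set_system T) (FF : Filter F) (I : Type) (r : seq I)
  (P : pred I) (f : I -> T -> C) (a : I -> C) :
  (forall i, P i -> f i x @[x --> F] --> a i) ->
  \prod_(i <- r | P i) f i x @[x --> F] --> \prod_(i <- r | P i) a i.
Proof.
move=> H; elim: r => [|i r IH].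
  rewrite big_nil; under eq_cvg do rewrite big_nil; exact: cvg_cst.
rewrite big_cons; under eq_cvg do rewrite big_cons.
case: ifP => Pi; last exact: IH.
apply: cvgM; [exact: H | exact: IH].
Qed.
End Big.

Lemma cancel_w (K : fieldType) (w x p b q : K) : w != 0 ->
  x / (p * b * q) = w * x / (p * b * (w * q)).
Proof.
move=> w0; rewrite !invfM.
have h : w * w^-1 = 1 by rewrite mulfV.
have -> : w * x * (p^-1 * b^-1 * (w^-1 * q^-1)) = x * (p^-1 * b^-1 * q^-1) * (w * w^-1) by ring.
by rewrite h mulr1.
Qed.

Lemma Fk_formula (R : realType) (tau : (nat -> complex R) -> complex R)
  (n : nat) (alpha : 'I_n -> complex R) (t : nat -> complex R)
  (fj : complex R -> nat -> complex R) :
  (forall j, alpha j != 0) ->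
  (forall (j : 'I_n) (b : complex R), `|b| < `|alpha j| ->
     series (fun m => fj (alpha j) m * b ^+ m) @ \oo --> fKP tau t (alpha j) b) ->
  forall k : nat, (k <= n)%N ->
  forall beta : 'I_n -> complex R,
    (forall i : 'I_n, (k <= i)%N -> beta i != 0) ->
    (forall i j : 'I_n, (k <= i)%N -> (k <= j)%N -> beta i = beta j -> i = j) ->
    Fk tau t alpha k beta =
      Dk tau t alpha fj k beta /
        (Bk1 k beta * \prod_(j < n | (k <= j)%N) beta j ^+ k).
Proof.
move=> a0 Hexp; elim=> [|k IH] kn beta bnz binj.
  rewrite /= /Ffun /Ddet /Dk /Bk1; congr (_ / _).
  rewrite [X in _ * X]big1 ?mulr1 => [|j _]; last by rewrite expr0.
  by apply: eq_bigl.
have hk : (k < n)%N by [].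
set X := fun z => \sum_j gfun R n tau t alpha fj k j z * cof R n tau t alpha fj beta k hk j.
set P := fun z => \prod_(j < n | (k < j)%N) (beta j - z).
set B := Bk1 k.+1 beta.
set Q := \prod_(j < n | (k.+1 <= j)%N) beta j ^+ k.
have Bnz : B != 0.
  rewrite /B /Bk1 prodf_seq_neq0; apply/allP => i _; apply/implyP => ki.
  rewrite prodf_seq_neq0; apply/allP => j _; apply/implyP => ij.
  rewrite subr_eq0; apply/eqP => /binj; move=> /(_ (ltn_trans ki ij) ki) ji.
  by move: ij; rewrite ji ltnn.
have Qnz : Q != 0.
  rewrite /Q prodf_seq_neq0; apply/allP => i _; apply/implyP => ki.
  by rewrite expf_neq0 // bnz.
have P0nz : P 0 != 0.
  rewrite /P prodf_seq_neq0; apply/allP => i _; apply/implyP => ki.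
  by rewrite subr0 bnz.
set X0 := \sum_j fj (alpha j) k * cof R n tau t alpha fj beta k hk j.
have HH : X z / (P z * B * Q) @[z --> (0 : complex R)^'] --> X0 / (P 0 * B * Q).
  apply: cvgM.
    apply: cvg_sumC => j _; apply: cvgM; last exact: cvg_cst.
    have r0 : 0 < `|alpha j| by rewrite normr_gt0.
    exact: (@powser_rem _ _ _ _ r0 (Hexp j) k).
  apply: cvgV; first by rewrite !mulf_neq0.
  apply: cvgM; last exact: cvg_cst.
  apply: cvgM; last exact: cvg_cst.
  apply: cvg_prodC => j _; apply: cvgB; first exact: cvg_cst.
  exact: nbhs_dnbhs.
have zb : \forall z \near (0 : complex R)^', forall i : 'I_n, (k < i)%N -> z != beta i.
  apply: filter_forall => i.
  have [ki|ki] := ltnP k i; last by near=> z.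
  have bi0 : 0 < `|beta i| by rewrite normr_gt0 bnz.
  apply: nbhs_dnbhs; apply: (filterS _ (nbhs0_lt bi0)) => z zl _.
  by apply/eqP => zbi; move: zl; rewrite zbi ltxx.
have Heq : \forall z \near (0 : complex R)^',
    X z / (P z * B * Q) = Fk tau t alpha k (upd beta k z).
  near=> z.
  have z0 : z != 0 by near: z; exact: nbhs_dnbhs_neq.
  have zbi : forall i : 'I_n, (k < i)%N -> z != beta i by near: z; exact: zb.
  have lt_of : forall l : 'I_n, (k <= l)%N -> val l != k -> (k < l)%N.
    by move=> l kl lk; rewrite ltn_neqAle eq_sym lk kl.
  have bnz' : forall i : 'I_n, (k <= i)%N -> upd beta k z i != 0.
    move=> i ki; rewrite /upd; case: ifP => [_|/negbT ik]; first exact: z0.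
    apply: bnz; exact: lt_of.
  have binj' : forall i j : 'I_n, (k <= i)%N -> (k <= j)%N ->
      upd beta k z i = upd beta k z j -> i = j.
    move=> i j ki kj; rewrite /upd.
    case: eqP => [ik|/eqP ik]; case: eqP => [jk|/eqP jk].
    - by move=> _; apply: val_inj; rewrite /= ik jk.
    - by move=> zj; move: (zbi j (lt_of j kj jk)); rewrite zj eqxx.
    - by move=> iz; move: (zbi i (lt_of i ki ik)); rewrite iz eqxx.
    - by apply: binj; exact: lt_of.
  rewrite (IH (ltnW kn) _ bnz' binj') (Dk_upd_g _ _ _ _ _ _ _ _ hk _ z0).
  rewrite (Bk1_upd _ _ _ _ hk) (prod_upd _ _ _ _ hk).
  apply: cancel_w; by rewrite expf_neq0.
have Hc : Fk tau t alpha k (upd beta k z) @[z --> (0 : complex R)^'] --> X0 / (P 0 * B * Q).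
  exact: cvg_trans (near_eq_cvg Heq) HH.
rewrite /= (cvg_lim _ Hc); last exact: norm_hausdorff.
rewrite (Dk_S _ _ _ _ _ _ _ _ hk) detMv -/X0.
have -> : \prod_(j < n | (k < j)%N) beta j ^+ k.+1 = Q * P 0.
  by rewrite /Q /P -big_split; apply: eq_bigr => j _; rewrite exprSr subr0.
congr (_ / _); ring.
Unshelve. all: by end_near. Qed.


Theorem mainTheorem5 (R : realType) (tau : (nat -> complex R) -> complex R)
  (n : nat) (alpha : 'I_n -> complex R) (t : nat -> complex R)
  (fj : complex R -> nat -> complex R) :
  KP_tau tau ->
  (1 <= n)%N ->
  (forall j, alpha j != 0) ->
  injective alpha ->
  (* expansion f(t, alpha_j, beta) = sum_m f_m(t, alpha_j) beta^m for |beta| < |alpha_j| *)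
  (forall (j : 'I_n) (b : complex R), `|b| < `|alpha j| ->
     series (fun m => fj (alpha j) m * b ^+ m) @ \oo --> fKP tau t (alpha j) b) ->
  forall k : nat, (1 <= k <= n)%N ->
  forall beta : 'I_n -> complex R,
    (forall i : 'I_n, (k <= i)%N -> beta i != 0) ->
    (forall i j : 'I_n, (k <= i)%N -> (k <= j)%N -> beta i = beta j -> i = j) ->
    Fk tau t alpha k beta =
      Dk tau t alpha fj k beta /
        (Bk1 k beta * \prod_(j < n | (k <= j)%N) beta j ^+ k).
Proof.
move=> _ _ a0 _ Hexp k /andP[_ kn] beta bnz binj.
exact: (@Fk_formula R tau n alpha t fj a0 Hexp k kn beta bnz binj).
Qed.
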